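(* Let $L=10^6$, $\rho<L^{-16}$, and let $\xi=(\xi_i)_{i\in\mathbb{Z}}$ be i.i.d. with $\mathbb{P}(\xi_i\ge n)=\rho^n$ for $n\in\{0,1,2,\dots\}$. With $H_m,B_m$ defined below from $\xi$, let $p_{k,h,b}=\mathbb{P}[H_{(k,0)}=h,\,B_{(k,0)}=b]$. Then for every $k,b\ge0$ and $h\ge1$, $$p_{k,h,b}\le L^{-\left(k+\frac{h}{b+1}\right)-2h-13}.$$
   Context: Let $L_k=L^k$. For $k\ge0$ and $i\in\mathbb{Z}$ let $I_{(k,i)}=[iL_k,(i+1)L_k)\cap\mathbb{Z}$ and $M_k=\{k\}\times\mathbb{Z}$. For $m=(k+1,i)\in M_{k+1}$ let $\mathcal{Q}_m=\{(k,iL+j):0\le j\le L-1\}$. Define $H_m$ recursively: $H_{(0,i)}=\xi_i$; for $m\in M_{k+1}$, $H_m=0$ if every $m'\in\mathcal{Q}_m$ is good; $H_m=H_{m_1}-1$ if $m_1$ is the only bad element of $\mathcal{Q}_m$; $H_m=1+\sum_{i=1}^r H_{m_i}$ if $m_1,\dots,m_r$ with $r\ge2$ are the bad elements of $\mathcal{Q}_m$. Here $m$ is good if $H_m=0$ and bad otherwise. Define $B_m$ recursively: $B_{(0,i)}=0$; for $m\in M_{k+1}$, $B_m=0$ if $m$ is good; $B_m=B_{m'}$ if $m$ is bad and $m'$ is the only bad element of $\mathcal{Q}_m$; $B_m=k+1$ if $\mathcal{Q}_m$ contains more than one bad element. *)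

(* Defs.v *)
From HB Require Import structures.
From mathcomp Require Import all_boot all_order all_algebra.
From mathcomp Require Import all_classical all_reals all_analysis.
Set Implicit Arguments. Unset Strict Implicit. Unset Printing Implicit Defensive.
Import Order.TTheory GRing.Theory Num.Theory.

Definition Lpar : nat := 10 ^ 6.

(* HB Lb xi k i = (H_(k,i), B_(k,i)) computed from the environment xi,
   with blocks of size Lb: the children of (k+1,i) are (k, i*Lb + j), j < Lb. *)
Fixpoint HB (Lb : nat) (xi : int -> nat) (k : nat) (i : int) : int * nat :=
  match k with
  | 0 => (Posz (xi i), 0%N)
  | k'.+1 =>
      let ch := [seq HB Lb xi k' (i * Posz Lb + Posz j)%R | j <- iota 0 Lb] in
      let bad := [seq c <- ch | c.1 != 0%R] in
      let H : int :=
        match bad with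
        | [::] => 0%R
        | [:: c] => (c.1 - 1)%R
        | _ => (1 + \sum_(c <- bad) c.1)%R
        end in
      let B : nat :=
        if H == 0%R then 0%N
        else match bad with
             | [:: c] => c.2
             | _ => k'.+1
             end in
      (H, B)
  end.

Definition Hval (Lb : nat) (xi : int -> nat) (k : nat) (i : int) : int := (HB Lb xi k i).1.
Definition Bval (Lb : nat) (xi : int -> nat) (k : nat) (i : int) : nat := (HB Lb xi k i).2.

(* Main.v *)
Require Import Defs.
From HB Require Import structures.
From mathcomp Require Import all_boot all_order all_algebra.
From mathcomp Require Import all_classical all_reals all_analysis.
From mathcomp Require Import ring lra.
Import Order.TTheory GRing.Theory Num.Theory.
Local Open Scope classical_set_scope.
Local Open Scope ring_scope.

Definition childs (Lb : nat) (f : int -> nat) (k j : nat) : seq nat :=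
  [seq c <- iota 0 Lb | Hval Lb f k (Posz (j * Lb + c)%N) != 0].

Lemma HB_S Lb f k j :
  HB Lb f k.+1 (Posz j) =
  let bad := [seq HB Lb f k (Posz (j * Lb + c)%N) | c <- childs Lb f k j] in
      let H : int :=
        match bad with
        | [::] => 0%R
        | [:: c] => (c.1 - 1)%R
        | _ => (1 + \sum_(c <- bad) c.1)%R
        end in
      let B : nat :=
        if H == 0%R then 0%N
        else match bad with
             | [:: c] => c.2
             | _ => k.+1
             end in
      (H, B).
Proof.
rewrite /= /childs.
have -> : [seq HB Lb f k (Posz j * Posz Lb + Posz c)%R | c <- iota 0 Lb] =
   [seq HB Lb f k (Posz (j * Lb + c)%N) | c <- iota 0 Lb].
  by apply: eq_map => c; rewrite PoszD PoszM.
by rewrite filter_map.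
Qed.

Lemma Hval_ge0 Lb f k i : 0 <= Hval Lb f k i.
Proof.
elim: k i => [|k IH] i /=; first by rewrite /Hval.
rewrite /Hval /=.
set bad := [seq _ <- _ | _].
have hb : forall c, c \in bad -> 0 < c.1.
  move=> c; rewrite mem_filter => /andP [nz /mapP [x _ E]].
  by rewrite E in nz *; rewrite lt_def nz; apply: IH.
case E: bad => [|c [|c' r]] //.
  have := hb c; rewrite E inE eqxx => /(_ isT) hc.
  by rewrite subr_ge0.
rewrite addr_ge0 // big_seq_cond sumr_ge0 // => x /andP [xin _].
by apply/ltW/hb; rewrite E.
Qed.

Lemma Bval_le Lb f k i : (Bval Lb f k i <= k)%N.
Proof.
elim: k i => [|k IH] i /=; first by rewrite /Bval.
rewrite /Bval /=.
set bad := [seq _ <- _ | _].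
case: ifP => // _.
case E: bad => [|c [|c' r]] //.
have : c \in bad by rewrite E inE eqxx.
rewrite mem_filter => /andP [_ /mapP [x _ ->]].
by apply: leq_trans (IH _) _.
Qed.

Definition wit := seq (nat * nat).

Fixpoint W12 (F : nat -> nat -> seq wit) (cs : seq nat) (s : nat) : seq wit * seq wit :=
  match cs with
  | [::] => ([::], [::])
  | c :: cs' => ((W12 F cs' s).1 ++ F c s,
      (W12 F cs' s).2 ++ flatten [seq [seq W ++ W' | W <- F c g,
             W' <- (W12 F cs' (s - g)).1 ++ (W12 F cs' (s - g)).2] | g <- iota 1 s])
  end.

Lemma W12_complete (F : nat -> nat -> seq wit) (P : wit -> bool) (Hc : nat -> int)
  (cs : seq nat) :
  (forall c, 0 <= Hc c) ->
  (forall c g, c \in cs -> Hc c = Posz g -> (0 < g)%N -> exists2 W, W \in F c g & P W) ->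
  (forall W W', P W -> P W' -> P (W ++ W')) ->
  forall s, \sum_(c <- [seq c <- cs | Hc c != 0]) Hc c = Posz s ->
  (size [seq c <- cs | Hc c != 0] = 1%N -> exists2 W, W \in (W12 F cs s).1 & P W) /\
  ((1 < size [seq c <- cs | Hc c != 0])%N -> exists2 W, W \in (W12 F cs s).2 & P W).
Proof.
move=> Hge0 HF HP; elim: cs HF => [|c cs IH] HF s /=; first by split.
have HF' : forall c0 g, c0 \in cs -> Hc c0 = Posz g -> (0 < g)%N ->
    exists2 W, W \in F c0 g & P W.
  by move=> c0 g c0in; apply: HF; rewrite inE c0in orbT.
case: ifP => [nz|z].
  have [g Eg] : exists g, Hc c = Posz g.
    by move: (Hge0 c); case: (Hc c) => [g|n] // _; exists g.
  have g0 : (0 < g)%N by move: nz; rewrite Eg; case: g {Eg}.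
  rewrite big_cons Eg.
  have sge0 : 0 <= \sum_(c0 <- [seq c0 <- cs | Hc c0 != 0]) Hc c0.
    by apply: sumr_ge0 => i _.
  have [s' Es'] : exists s', \sum_(c0 <- [seq c0 <- cs | Hc c0 != 0]) Hc c0 = Posz s'.
    by move: sge0; case: (\sum_(c0 <- _ | _) _) => [m|n] // _; exists m.
  rewrite Es' -PoszD => -[Es].
  have Esg : (s - g)%N = s' by rewrite -Es addKn.
  split.
    move=> /eqP; rewrite eqSS => /eqP /size0nil E0.
    move: Es'; rewrite E0 big_nil => -[s'0].
    have -> : s = g by rewrite -Es -s'0 addn0.
    have [W WF PW] := HF c g (mem_head _ _) Eg g0.
    by exists W => //; rewrite mem_cat WF orbT.
  rewrite ltnS => sz.
  have [W WF PW] := HF c g (mem_head _ _) Eg g0.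
  have [W' W'in PW'] : exists2 W', W' \in (W12 F cs s').1 ++ (W12 F cs s').2 & P W'.
    have [IH1 IH2] := IH HF' s' Es'.
    move: sz; rewrite leq_eqVlt => /orP [/eqP/esym sz|sz].
      by have [W' ? ?] := IH1 sz; exists W' => //; rewrite mem_cat; apply/orP; left.
    by have [W' ? ?] := IH2 sz; exists W' => //; rewrite mem_cat; apply/orP; right.
  exists (W ++ W'); last by apply: HP.
  rewrite mem_cat; apply/orP; right.
  apply/flattenP.
  exists [seq W0 ++ W'0 | W0 <- F c g,
             W'0 <- (W12 F cs (s - g)).1 ++ (W12 F cs (s - g)).2].
    by apply: map_f; rewrite mem_iota g0 add1n ltnS -Es leq_addr.
  by rewrite Esg; apply: allpairs_f.
move=> Es.
have [IH1 IH2] := IH HF' s Es.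
split.
  by move=> sz; have [W ? ?] := IH1 sz; exists W => //; rewrite mem_cat; apply/orP; left.
by move=> sz; have [W ? ?] := IH2 sz; exists W => //; rewrite mem_cat; apply/orP; left.
Qed.

Definition good (f : int -> nat) (W : wit) := all (fun p => p.2 <= f (Posz p.1))%N W.

Fixpoint Wit (Lb k j h b : nat) : seq wit :=
  match k with
  | 0 => if (b == 0%N) && (0 < h)%N then [:: [:: (j, h)]] else [::]
  | k'.+1 => if h == 0%N then [::] else
     if (b <= k')%N then flatten [seq Wit Lb k' (j * Lb + c) h.+1 b | c <- iota 0 Lb]
     else if b == k'.+1 then
       (W12 (fun c g => if g == 0%N then [::] else
               flatten [seq Wit Lb k' (j * Lb + c) g b' | b' <- iota 0 k'.+1])
            (iota 0 Lb) h.-1).2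
     else [::]
  end.

Definition WitH (Lb k j c g : nat) : seq wit :=
  if g == 0%N then [::] else flatten [seq Wit Lb k (j * Lb + c) g b' | b' <- iota 0 k.+1].
Arguments WitH : simpl never.

Lemma Wit_S Lb k j h b : Wit Lb k.+1 j h b =
  if h == 0%N then [::] else
     if (b <= k)%N then flatten [seq Wit Lb k (j * Lb + c) h.+1 b | c <- iota 0 Lb]
     else if b == k.+1 then (W12 (WitH Lb k j) (iota 0 Lb) h.-1).2
     else [::].
Proof. by []. Qed.

Lemma Wit_complete Lb f k j h : Hval Lb f k (Posz j) = Posz h -> (0 < h)%N ->
  exists2 W, W \in Wit Lb k j h (Bval Lb f k (Posz j)) & good f W.
Proof.
elim: k j h => [|k IH] j h.
  rewrite /Hval /Bval /= => -[<-] h0; exists [:: (j, f (Posz j))].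
    by rewrite h0 mem_head.
  by rewrite /good /= leqnn.
move=> Hh h0; move: Hh; rewrite Wit_S /Hval /Bval HB_S /=.
have hn0 : (h == 0%N) = false by case: h h0.
have cin : forall c, c \in childs Lb f k j -> c \in iota 0 Lb.
  by move=> c; rewrite mem_filter => /andP [].
rewrite hn0.
case E: (childs Lb f k j) => [|c [|c' r]] /=.
- by move=> [] /esym/eqP; rewrite hn0.
- move=> Hc.
  have Hc' : Hval Lb f k (Posz (j * Lb + c)) = Posz h.+1.
    by rewrite /Hval -[_.1](subrK 1) Hc -addn1 PoszD.
  rewrite Hc /= eqz_nat hn0.
  have bk := Bval_le Lb f k (Posz (j * Lb + c)).
  rewrite /Bval in bk; rewrite bk.
  have [W WW gW] := IH _ _ Hc' (ltn0Sn _).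
  exists W => //; apply/flattenP.
  exists (Wit Lb k (j * Lb + c) h.+1 (Bval Lb f k (Posz (j * Lb + c)))) => //.
  by apply: map_f; apply: cin; rewrite E mem_head.
- move=> Hs.
  have Hs' : 1 + \sum_(c0 <- childs Lb f k j) Hval Lb f k (Posz (j * Lb + c0)) = Posz h.
    rewrite -Hs E; congr (_ + _); rewrite /Hval.
    by rewrite -(big_map (fun c0 => HB Lb f k (Posz (j * Lb + c0))) predT (fun x => x.1)).
  rewrite Hs eqz_nat hn0 ltnn eqxx.
  have HF : forall c0 g, c0 \in iota 0 Lb -> Hval Lb f k (Posz (j * Lb + c0)) = Posz g ->
      (0 < g)%N -> exists2 W, W \in WitH Lb k j c0 g & good f W.
    move=> c0 g _ Hg g0.
    have [W WW gW] := IH _ _ Hg g0.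
    exists W => //; rewrite /WitH; case: eqP => [g00|_]; first by rewrite g00 in g0.
    apply/flattenP; exists (Wit Lb k (j * Lb + c0) g (Bval Lb f k (Posz (j * Lb + c0)))) => //.
    by apply: map_f; rewrite mem_iota add0n ltnS Bval_le.
  have HP : forall W W', good f W -> good f W' -> good f (W ++ W').
    by move=> W W' gW gW'; rewrite /good all_cat; apply/andP.
  have Hsum : \sum_(c0 <- childs Lb f k j) Hval Lb f k (Posz (j * Lb + c0)) = Posz h.-1.
    apply: (@addrI _ 1); rewrite Hs'.
    by rewrite -[1]/(Posz 1) -PoszD add1n prednK.
  have [_ H2] := @W12_complete (WitH Lb k j) (good f) (fun c0 => Hval Lb f k (Posz (j * Lb + c0)))
     (iota 0 Lb) (fun c0 => Hval_ge0 _ _ _ _) HF HP h.-1 Hsum.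
  by apply: H2; rewrite -/(childs Lb f k j) E.
Qed.

Lemma W12_sites (F : nat -> nat -> seq wit) (Q : nat -> nat -> bool) (cs : seq nat) :
  (forall c g W, c \in cs -> W \in F c g ->
      uniq (map fst W) && all (fun p => Q c p.1) W) ->
  (forall c c' i, Q c i -> Q c' i -> c = c') ->
  uniq cs ->
  forall s W, W \in (W12 F cs s).1 ++ (W12 F cs s).2 ->
    uniq (map fst W) && all (fun p => has (fun c => Q c p.1) cs) W.
Proof.
move=> HF HQ; elim: cs HF => [|c cs IH] HF //= /andP [ncs ucs] s W.
have HF' : forall c0 g W, c0 \in cs -> W \in F c0 g ->
      uniq (map fst W) && all (fun p => Q c0 p.1) W.
  by move=> c0 g W0 c0in; apply: HF; rewrite inE c0in orbT.
have weak : forall W0 : wit, uniq (map fst W0) && all (fun p => has (fun c => Q c p.1) cs) W0 ->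
    uniq (map fst W0) && all (fun p => Q c p.1 || has (fun c => Q c p.1) cs) W0.
  move=> W0 /andP [u /allP H]; rewrite u /=; apply/allP => p pin.
  by rewrite H ?orbT.
rewrite !mem_cat => /orP [/orP [W1|WF] | /orP [W2|Wfl]].
- by apply: weak; apply: (IH HF' ucs s); rewrite mem_cat W1.
- have /andP [-> /allP H] := HF c s W (mem_head _ _) WF.
  by apply/allP => p pin; rewrite H.
- by apply: weak; apply: (IH HF' ucs s); rewrite mem_cat W2 orbT.
move/flattenP: Wfl => [l /mapP [g gin ->]] /allpairsP [[W0 W'] [/= W0in W'in ->]].
have /andP [u0 /allP a0] := HF c g W0 (mem_head _ _) W0in.
have /andP [u1 /allP a1] := IH HF' ucs (s - g)%N W' W'in.
rewrite map_cat cat_uniq u0 u1 /= andbT all_cat; apply/andP; split.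
  apply/hasPn => i /mapP [p pin ->].
  apply/negP => /mapP [p0 p0in Ep].
  have /hasP [c' c'in Qc'] := a1 p pin.
  have Qc := a0 p0 p0in; rewrite -Ep in Qc.
  by move: c'in; rewrite -(HQ _ _ _ Qc Qc') => cin; rewrite cin in ncs.
apply/andP; split; apply/allP => p pin.
  by rewrite a0.
by rewrite a1 ?orbT.
Qed.

Lemma Wit_sites Lb k j h b W : (0 < Lb)%N -> W \in Wit Lb k j h b ->
  uniq (map fst W) && all (fun p => p.1 %/ Lb ^ k == j)%N W.
Proof.
move=> L0; elim: k j h b W => [|k IH] j h b W.
  by rewrite /=; case: ifP => // _; rewrite inE => /eqP -> /=; rewrite expn0 divn1 eqxx.
have up : forall i c, (c < Lb)%N -> (i %/ Lb ^ k == j * Lb + c)%N -> (i %/ Lb ^ k.+1 == j)%N.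
  move=> i c cL /eqP E; rewrite expnSr divnMA E divnMDl // divn_small // addn0 //.
rewrite Wit_S; case: ifP => // _; case: ifP => [_|_].
  move/flattenP => [l /mapP [c cin ->]] /IH /andP [-> /allP H] /=.
  apply/allP => p pin; apply: (up _ c); last by apply: H.
  by move: cin; rewrite mem_iota.
case: ifP => // _ Win.
have HF : forall c g W0, c \in iota 0 Lb -> W0 \in WitH Lb k j c g ->
    uniq (map fst W0) && all (fun p => p.1 %/ Lb ^ k == j * Lb + c)%N W0.
  move=> c g W0 _; rewrite /WitH; case: ifP => // _.
  by move/flattenP => [l /mapP [b' _ ->]] /IH.
have HQ : forall c c' i, (i %/ Lb ^ k == j * Lb + c)%N -> (i %/ Lb ^ k == j * Lb + c')%N -> c = c'.
  by move=> c c' i /eqP -> /eqP /addnI.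
have := @W12_sites (WitH Lb k j) (fun c i => i %/ Lb ^ k == j * Lb + c)%N (iota 0 Lb)
  HF HQ (iota_uniq _ _) h.-1 W.
rewrite mem_cat Win orbT => /(_ isT) /andP [-> /allP H] /=; apply/allP => p pin.
have /hasP [c cin Qc] := H p pin.
by apply: (up _ c) => //; move: cin; rewrite mem_iota.
Qed.

Definition cyl {T : Type} (xi : int -> T -> nat) (W : wit) : set T :=
  [set t | good (fun i => xi i t) W].

Lemma cyl_meas d (T : measurableType d) (xi : int -> T -> nat)
  (hmeas : forall (i : int) (A : set nat), measurable (xi i @^-1` A)) W :
  measurable (cyl xi W).
Proof.
elim: W => [|p W IH].
  by have -> : cyl xi [::] = setT by apply/seteqP; split.
have -> : cyl xi (p :: W) = xi (Posz p.1) @^-1` [set n | (p.2 <= n)%N] `&` cyl xi W.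
  by apply/seteqP; split => t /=; rewrite /cyl /good /= => /andP.
exact: measurableI.
Qed.

Fixpoint thr (W : wit) (i : int) : nat :=
  match W with [::] => 0%N | p :: W' => if Posz p.1 == i then p.2 else thr W' i end.

Lemma thrP W p : uniq (map fst W) -> p \in W -> thr W (Posz p.1) = p.2.
Proof.
elim: W => [|q W IH] //= /andP [nq u]; rewrite inE => /orP [/eqP ->|pin].
  by rewrite eqxx.
case: eqP => [[e]|_]; last by apply: IH.
by move: nq; rewrite e; move/negP; case; apply: map_f.
Qed.

Lemma cyl_prob (R : realType) d (T : measurableType d) (P : probability T R) (rho : R)
  (xi : int -> T -> nat)
  (hindep : forall (s : seq int) (A : int -> set nat), uniq s ->
     P (\bigcap_(i in [set` s]) (xi i @^-1` A i)) =
     (\prod_(i <- s) P (xi i @^-1` A i))%E)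
  (hlaw : forall (i : int) (n : nat),
     P [set t | (n <= xi i t)%N] = (rho ^+ n)%:E)
  W : uniq (map fst W) ->
  P (cyl xi W) = (\prod_(p <- W) rho ^+ p.2)%:E.
Proof.
move=> uW.
set s := map (fun p => Posz p.1) W.
have us : uniq s by rewrite /s (map_comp Posz fst) map_inj_uniq //; move=> x y [].
have -> : cyl xi W = \bigcap_(i in [set` s]) (xi i @^-1` [set n | (thr W i <= n)%N]).
  apply/seteqP; split => t /=.
    rewrite /cyl /good => /allP H i /= /mapP [p pin ->] /=.
    by rewrite thrP //; apply: H.
  move=> H; rewrite /cyl /good; apply/allP => p pin.
  have := H (Posz p.1); rewrite /= thrP //; apply.
  by apply: map_f.
rewrite hindep // /s big_map -prodEFin.
apply: eq_big_seq => p pin.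
by rewrite -(thrP _ _ uW pin) hlaw.
Qed.

Lemma union_bound (R : realType) d (T : measurableType d) (P : probability T R)
  (xi : int -> T -> nat)
  (hmeas : forall (i : int) (A : set nat), measurable (xi i @^-1` A))
  (l : seq wit) (E : set T) : measurable E ->
  (forall t, E t -> exists2 W, W \in l & cyl xi W t) ->
  (P E <= \sum_(W <- l) P (cyl xi W))%E.
Proof.
elim: l E => [|W l IH] E mE HE.
  have -> : E = set0.
    by apply/seteqP; split => t // /HE [W].
  by rewrite measure0 big_nil.
rewrite big_cons.
have mc := @cyl_meas _ _ xi hmeas W.
apply: (@le_trans _ _ (P (cyl xi W `|` (E `\` cyl xi W)))).
  apply: le_measure; rewrite ?inE //.
  - by apply: measurableU => //; apply: measurableD.
  - move=> t Et; case: (pselect (cyl xi W t)) => c; first by left.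
    by right.
apply: le_trans (measureU2 _ _ _) _ => //; first by apply: measurableD.
apply: leeD2l; apply: IH; first by apply: measurableD.
move=> t [Et nc]; have [W' W'in cW'] := HE t Et.
move: W'in; rewrite inE => /orP [/eqP eW|W'in]; last by exists W'.
by rewrite eW in cW'.
Qed.

Lemma meas_dep d (T : measurableType d) (xi : int -> T -> nat)
  (hmeas : forall (i : int) (A : set nat), measurable (xi i @^-1` A))
  (s : seq int) (F : (int -> nat) -> Prop) :
  (forall f g, {in s, f =1 g} -> F f -> F g) ->
  measurable [set t | F (fun i => xi i t)].
Proof.
elim: s F => [|a s IH] F HF.
  case: (pselect (F (fun _ => 0%N))) => h.
    have -> : [set t | F (fun i => xi i t)] = setT.
      by apply/seteqP; split => t // _; apply: HF h.
    exact: measurableT.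
  have -> : [set t | F (fun i => xi i t)] = set0.
    by apply/seteqP; split => t //= Ft; apply: h; apply: HF Ft.
  exact: measurable0.
have -> : [set t | F (fun i => xi i t)] =
   \bigcup_(v : nat) (xi a @^-1` [set v] `&`
        [set t | F (fun i => if i == a then v else xi i t)]).
  apply/seteqP; split => t /=.
    move=> Ft; exists (xi a t) => //; split => //=.
    by apply: HF Ft => i _; case: eqP => // ->.
  move=> [v _ [/= xv Ft]]; apply: HF Ft => i _; case: eqP => // ->.
  by rewrite xv.
apply: bigcupT_measurable => v; apply: measurableI => //.
apply: (IH (fun f => F (fun i => if i == a then v else f i))).
move=> f g fg; apply: HF => i; rewrite inE; case: eqP => [//|ne] /= iin.
exact: fg.
Qed.

Lemma HB_local Lb k j f g : (0 < Lb)%N ->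
  (forall i, (j * Lb ^ k <= i < j.+1 * Lb ^ k)%N -> f (Posz i) = g (Posz i)) ->
  HB Lb f k (Posz j) = HB Lb g k (Posz j).
Proof.
move=> L0; elim: k j => [|k IH] j H.
  by rewrite /= H // expn0 !muln1 leqnn ltnSn.
have e : forall c, c \in iota 0 Lb -> HB Lb f k (Posz (j * Lb + c)) = HB Lb g k (Posz (j * Lb + c)).
  move=> c; rewrite mem_iota add0n => cL; apply: IH => i /andP [i1 i2]; apply: H.
  rewrite expnS !mulnA; apply/andP; split.
    by apply: leq_trans _ i1; rewrite leq_mul2r leq_addr orbT.
  apply: (leq_trans i2). rewrite leq_mul2r; apply/orP; right.
  by rewrite mulSn [(Lb + _)%N]addnC -addnS leq_add2l.
have Ec : childs Lb f k j = childs Lb g k j.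
  by apply: eq_in_filter => c cin; rewrite /Hval e.
have Em : [seq HB Lb f k (Posz (j * Lb + c)) | c <- childs Lb f k j] =
          [seq HB Lb g k (Posz (j * Lb + c)) | c <- childs Lb g k j].
  rewrite -Ec; apply/eq_in_map => c; rewrite mem_filter => /andP [_ cin].
  exact: e.
by rewrite !HB_S Em.
Qed.

Definition weight {R : realType} (rho : R) (W : wit) : R := \prod_(p <- W) rho ^+ p.2.

Lemma weight_cat (R : realType) (rho : R) W W' :
  weight rho (W ++ W') = weight rho W * weight rho W'.
Proof. by rewrite /weight big_cat. Qed.

Lemma weight_ge0 (R : realType) (rho : R) W : 0 <= rho -> 0 <= weight rho W.
Proof. by move=> r0; apply: prodr_ge0 => p _; apply: exprn_ge0. Qed.

Lemma sum_const_seq (R : realType) (I : Type) (s : seq I) (c : R) :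
  \sum_(i <- s) c = c *+ size s.
Proof. by elim: s => [|a s IH]; rewrite ?big_nil ?big_cons ?IH ?mulrS. Qed.

Lemma geom_sum (R : realType) (q : R) s :
  (\sum_(g <- iota 1 s) q ^+ g) * (1 - q) = q - q ^+ s.+1.
Proof.
elim: s => [|s IH]; first by rewrite big_nil mul0r expr1 subrr.
have -> : iota 1 s.+1 = iota 1 s ++ [:: s.+1] by rewrite -(addn1 s) iotaD /= add1n addn1.
rewrite big_cat big_seq1 mulrDl IH !exprS; ring.
Qed.

Lemma geom_le (R : realType) (D : R) s : 0 <= D ->
  \sum_(g <- iota 1 s) (D / (D + 1)) ^+ g <= D.
Proof.
move=> D0.
set q := D / (D + 1).
have D1 : 0 < D + 1 by lra.
have q0 : 0 <= q by apply: divr_ge0; lra.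
have q1 : 1 - q = (D + 1)^-1.
  rewrite /q; field; lra.
have e := geom_sum _ q s.
have Hp : 0 < 1 - q by rewrite q1 invr_gt0.
have qD : q = D * (1 - q) by rewrite q1 /q.
rewrite -(ler_pM2r Hp) e.
have : 0 <= q ^+ s.+1 by apply: exprn_ge0.
rewrite -qD; move: (q ^+ s.+1) => y; lra.
Qed.

Lemma lerX (R : realType) (a b : R) n : 0 <= a -> a <= b -> a ^+ n <= b ^+ n.
Proof. move=> a0 ab; apply: lerXn2r => //; rewrite nnegrE //; lra. Qed.

Lemma W12_bound (R : realType) (rho : R) (F : nat -> nat -> seq wit) (cs : seq nat)
  (x al be D : R) :
  0 <= rho -> 0 <= x -> 0 <= al -> al <= be -> 0 <= D ->
  (forall c g, \sum_(W <- F c g) weight rho W <= x * al ^+ g) ->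
  (forall s, \sum_(g <- iota 1 s) al ^+ g * be ^+ (s - g) <= D * be ^+ s) ->
  (size cs)%:R * x * D <= 1 ->
  forall s, \sum_(W <- (W12 F cs s).1) weight rho W <= (size cs)%:R * x * be ^+ s /\
    \sum_(W <- (W12 F cs s).2) weight rho W <= (size cs)%:R ^+ 2 * x ^+ 2 * D * be ^+ s.
Proof.
move=> r0 x0 a0 ab D0 HF Hg; elim: cs => [|c cs IH] hsz s.
  by rewrite /= !big_nil mulr0n expr0n /= !mul0r.
have b0 : 0 <= be by lra.
set n : R := (size cs)%:R.
have n0 : 0 <= n by rewrite /n ler0n.
have En : (size (c :: cs))%:R = n + 1 by rewrite /= -addn1 natrD.
rewrite En in hsz *.
have xD : 0 <= x * D by apply: mulr_ge0.
have hsz' : n * x * D <= 1.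
  apply: le_trans hsz; rewrite -!mulrA mulrDl mul1r lerDl //.
have wge0 : forall l : seq wit, 0 <= \sum_(W <- l) weight rho W.
  by move=> l; apply: sumr_ge0 => W _; apply: weight_ge0.
split.
  rewrite /= big_cat /=.
  have [h1 _] := IH hsz' s; rewrite -/n in h1.
  have h2 := HF c s.
  have h3 : x * al ^+ s <= x * be ^+ s by apply: ler_wpM2l => //; apply: lerX.
  rewrite mulrDl mulrDl mul1r; lra.
rewrite /= big_cat /= big_flatten big_map.
set c0 := x * (n * x + n ^+ 2 * x ^+ 2 * D).
have c00 : 0 <= c0 by apply: mulr_ge0 => //; apply: addr_ge0; apply: mulr_ge0 => //;
  rewrite ?mulr_ge0 ?exprn_ge0.
have hB : \sum_(g <- iota 1 s)
     \sum_(W <- [seq W ++ W' | W <- F c g,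
               W' <- (W12 F cs (s - g)).1 ++ (W12 F cs (s - g)).2]) weight rho W
   <= \sum_(g <- iota 1 s) c0 * (al ^+ g * be ^+ (s - g)).
  apply: ler_sum => g _.
  rewrite big_allpairs_dep /=.
  under eq_bigr do under eq_bigr do rewrite weight_cat.
  under eq_bigr do rewrite -mulr_sumr.
  rewrite -mulr_suml big_cat /=.
  have [i1 i2] := IH hsz' (s - g)%N; rewrite -/n in i1 i2.
  apply: le_trans.
    apply: ler_pM; [exact: wge0 | exact: addr_ge0 (wge0 _) (wge0 _) | exact: HF |].
    exact: lerD i1 i2.
  rewrite /c0 le_eqVlt; apply/orP; left; apply/eqP; ring.
have hC : \sum_(g <- iota 1 s) c0 * (al ^+ g * be ^+ (s - g)) <= c0 * (D * be ^+ s).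
  by rewrite -mulr_sumr; apply: ler_wpM2l.
have [_ h2] := IH hsz' s; rewrite -/n in h2.
set B := be ^+ s in hC h2 *.
have B0 : 0 <= B by apply: exprn_ge0.
have nn : n * (n * x * D) <= n by rewrite -[X in _ <= X]mulr1 ler_wpM2l.
have key : 0 <= x ^+ 2 * D * B * (n + 1 - n * (n * x * D)).
  apply: mulr_ge0; first by rewrite !mulr_ge0 ?exprn_ge0.
  lra.
have e : (n + 1) ^+ 2 * x ^+ 2 * D * B - (n ^+ 2 * x ^+ 2 * D * B + c0 * (D * B)) =
   x ^+ 2 * D * B * (n + 1 - n * (n * x * D)) by rewrite /c0; ring.
lra.
Qed.

Lemma PM (R : realType) (L a b : R) : 0 < L -> L `^ a * L `^ b = L `^ (a + b).
Proof. by move=> L0; rewrite powRD //; apply/implyP => _; rewrite gt_eqF. Qed.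

Lemma PX (R : realType) (L a : R) n : 0 <= L -> (L `^ a) ^+ n = L `^ (a * n%:R).
Proof. by move=> L0; rewrite -powR_mulrn ?powR_ge0 // -powRrM. Qed.

Lemma PN (R : realType) (L : R) n : 0 <= L -> L ^+ n = L `^ n%:R.
Proof. by move=> L0; rewrite powR_mulrn. Qed.

Lemma expR1_le4 (R : realType) : expR (1 : R) <= 4.
Proof.
have h : 1 / 2 <= expR (- (1 / 2) : R).
  apply: le_trans (expR_ge1Dx _); lra.
have e2 : expR (1 / 2 : R) <= 2.
  rewrite -[expR (1 / 2)]invrK -expRN.
  have y0 : 0 < expR (- (1 / 2) : R) by apply: expR_gt0.
  move: h y0; set y := expR _ => h y0.
  rewrite -div1r ler_pdivrMr //; lra.
have -> : (1 : R) = 1 / 2 + 1 / 2 by lra.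
rewrite expRD.
have e0 : 0 <= expR (1 / 2 : R) by apply: expR_ge0.
nra.
Qed.

Lemma Lpar_ge16 : (16 <= Lpar)%N.
Proof.
rewrite /Lpar; apply: (@leq_trans (10 ^ 2)); first by [].
by apply: leq_pexp2l.
Qed.

Lemma kbound k : (k.+1 ^ 3 * k.+2 <= Lpar ^ (k + 7))%N.
Proof.
have h1 : (k.+1 ^ 3 * k.+2 <= k.+2 ^ 4)%N.
  by rewrite (expnS k.+2 3) [(k.+2 * _)%N]mulnC leq_mul2r leq_exp2r // leqnSn orbT.
apply: leq_trans h1 _.
have h2 : (k.+2 < 2 ^ k.+2)%N by apply: ltn_expl.
apply: (@leq_trans ((2 ^ k.+2) ^ 4)).
  by rewrite leq_exp2r // ltnW.
rewrite -expnM mulnC expnM.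
apply: (@leq_trans (Lpar ^ k.+2)).
  by rewrite leq_exp2r // Lpar_ge16.
by apply: leq_pexp2l; [apply: leq_trans Lpar_ge16 | rewrite -addn2 leq_add2l].
Qed.

Definition Bnd {R : realType} (k h b : nat) : R :=
  (Lpar%:R : R) `^ (- (k%:R + h%:R / b.+1%:R) - 2 * h%:R - 13).

Lemma Wit_bound (R : realType) (rho : R) : 0 <= rho -> rho <= (Lpar%:R : R) `^ (-16) ->
  forall k j h b, \sum_(W <- Wit Lpar k j h b) weight rho W <= Bnd k h b.
Proof.
move=> r0 rL.
have L1 : 1 <= (Lpar%:R : R) by rewrite ler1n; apply: leq_trans Lpar_ge16.
have [L eL] : exists L, (Lpar%:R : R) = L by eexists.
rewrite eL in rL L1.
have L0 : 0 < L by lra.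
have L0' : 0 <= L by lra.
have L4 : 4 <= L.
  by rewrite -eL ler_nat; apply: leq_trans Lpar_ge16.
elim=> [|k IH] j h b.
  rewrite /=; case: ifP => [/andP [/eqP -> h0]|_]; last by rewrite big_nil powR_ge0.
  rewrite big_seq1 /weight big_seq1 /=.
  apply: le_trans (lerX _ _ _ h r0 rL) _.
  rewrite PX // /Bnd eL; apply: ler_powR => //.
  have -> : (0.+1%:R : R) = 1 by [].
  have h1 : 1 <= (h%:R : R) by rewrite ler1n.
  rewrite mulr0n divr1; lra.
rewrite Wit_S; case: eqP => [->|/eqP hn0]; first by rewrite big_nil powR_ge0.
case: ifP => [bk|nbk].
  rewrite big_flatten big_map.
  apply: (@le_trans _ _ (\sum_(c <- iota 0 Lpar) Bnd k h.+1 b)).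
    by apply: ler_sum => c _; apply: IH.
  rewrite sum_const_seq size_iota -mulr_natl eL.
  rewrite /Bnd eL -{1}(powRr1 L0') PM //; apply: ler_powR => //.
  rewrite -[k.+1%:R]natr1 -[h.+1%:R]natr1 mulrDl.
  have : 0 <= 1 / (b.+1%:R : R) by rewrite divr_ge0.
  move: (h%:R / b.+1%:R : R) => y; move: (1 / b.+1%:R : R) => z; lra.
case: ifP => [/eqP bk1|_]; last by rewrite big_nil powR_ge0.
rewrite bk1.
set K : R := k%:R.
have K0 : 0 <= K by rewrite /K ler0n.
have e1 : (k.+1%:R : R) = K + 1 by rewrite -natr1.
have e2 : (k.+2%:R : R) = K + 2 by rewrite -!natr1 /K; lra.
set D : R := (K + 1) * (K + 2).
have D0 : 0 < D by rewrite /D; apply: mulr_gt0; lra.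
set x : R := (K + 1) * L `^ (- K - 13).
have x0 : 0 <= x by rewrite /x mulr_ge0 ?powR_ge0 //; lra.
set al : R := L `^ (- (2 + 1 / (K + 1))).
have al0 : 0 <= al by apply: powR_ge0.
have Dinv0 : 0 <= D^-1 by rewrite invr_ge0; lra.
set be : R := al * (1 + D^-1).
have albe : al <= be by rewrite /be ler_peMr //; lra.
have HF : forall c g, \sum_(W <- WitH Lpar k j c g) weight rho W <= x * al ^+ g.
  move=> c g; rewrite /WitH; case: eqP => [_|/eqP g0].
    by rewrite big_nil mulr_ge0 ?exprn_ge0.
  rewrite big_flatten big_map.
  set M : R := L `^ (- (K + g%:R / (K + 1)) - 2 * g%:R - 13).
  apply: (@le_trans _ _ (\sum_(b' <- iota 0 k.+1) M)).
    rewrite big_seq [X in _ <= X]big_seq; apply: ler_sum => b' b'in.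
    apply: le_trans (IH _ _ _) _; rewrite /Bnd eL; apply: ler_powR => //.
    have hb : (b' <= k)%N by move: b'in; rewrite mem_iota add0n ltnS.
    have hinv : (K + 1)^-1 <= (b'.+1%:R : R)^-1.
      rewrite lef_pV2 ?posrE ?ltr0Sn //; last by lra.
      by rewrite -e1 ler_nat ltnS.
    have := ler_wpM2l (ler0n _ g) hinv.
    rewrite -/K; move: (g%:R * (K + 1)^-1 : R) => y.
    move: (g%:R * (b'.+1%:R)^-1 : R) => z; lra.
  rewrite sum_const_seq size_iota -mulr_natl e1.
  rewrite /x /al PX // -mulrA PM //; apply: ler_wpM2l; first lra.
  apply: ler_powR => //.
  have -> : - (2 + 1 / (K + 1)) * g%:R = - 2 * g%:R - g%:R / (K + 1) by ring.
  move: (g%:R / (K + 1) : R) => y; lra.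
have Hg : forall s, \sum_(g <- iota 1 s) al ^+ g * be ^+ (s - g) <= D * be ^+ s.
  move=> s.
  set q := D / (D + 1).
  have alq : al = be * q.
    rewrite /be /q; field.
    by apply/andP; split; apply/negP => /eqP; lra.
  have -> : \sum_(g <- iota 1 s) al ^+ g * be ^+ (s - g) =
            \sum_(g <- iota 1 s) be ^+ s * q ^+ g.
    apply: eq_big_seq => g; rewrite mem_iota => /andP [g1 g2].
    have gs : (g <= s)%N by move: g2; rewrite add1n ltnS.
    by rewrite alq exprMn mulrAC -exprD subnKC.
  rewrite -mulr_sumr [D * _]mulrC; apply: ler_wpM2l; first by apply: exprn_ge0; lra.
  by apply: geom_le; lra.
have kb : (K + 1) ^+ 3 * (K + 2) <= L `^ (K + 7).
  have := kbound k; rewrite -(ler_nat R) natrM (natrX R Lpar) (natrX R k.+1) eL (PN _ L) // natrD -/K e1 e2.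
  by [].
have hsz : (size (iota 0 Lpar))%:R * x * D <= 1.
  rewrite size_iota eL.
  have e : L * x * D = ((K + 1) ^+ 2 * (K + 2)) * L `^ (1 + (- K - 13)).
    by rewrite -PM // powRr1 // /x /D; ring.
  rewrite e.
  have k2 : (K + 1) ^+ 2 * (K + 2) <= L `^ (K + 7).
    apply: le_trans kb; rewrite (exprS (K + 1) 2) -mulrA ler_peMl //; last by lra.
    by rewrite mulr_ge0 ?exprn_ge0 //; lra.
  apply: le_trans (ler_wpM2r (powR_ge0 _ _) k2) _.
  rewrite PM // -[X in _ <= X](powRr0 L); apply: ler_powR => //; lra.
have [_ H2] := W12_bound _ _ _ _ _ _ _ _ r0 x0 al0 albe (ltW D0) HF Hg hsz h.-1.
apply: le_trans H2 _; clear hsz.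
rewrite size_iota eL.
have dL : 1 + D^-1 <= L `^ (D^-1).
  apply: le_trans (expR_ge1Dx _) _.
  rewrite -{1}[D^-1]mul1r expRM; apply: ge0_ler_powR; rewrite ?nnegrE ?expR_ge0 //.
  exact: le_trans (expR1_le4 R) L4.
have bebound : be ^+ h.-1 <= al ^+ h.-1 * L `^ (D^-1 * (h.-1)%:R).
  rewrite /be exprMn -PX //; apply: ler_wpM2l; first exact: exprn_ge0.
  by apply: lerX => //; lra.
have Hh : (h%:R : R) = (h.-1)%:R + 1 by rewrite natr1 prednK // lt0n.
have pre : 0 <= L ^+ 2 * x ^+ 2 * D.
  by rewrite !mulr_ge0 ?exprn_ge0 ?powR_ge0 //; lra.
apply: le_trans (ler_wpM2l pre bebound) _.
have e : L ^+ 2 * x ^+ 2 * D * (al ^+ h.-1 * L `^ (D^-1 * (h.-1)%:R)) =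
   ((K + 1) ^+ 3 * (K + 2)) *
   L `^ (2 + (- K - 13) * 2 + - (2 + 1 / (K + 1)) * (h.-1)%:R + D^-1 * (h.-1)%:R).
  rewrite /x /al exprMn !PX // (PN _ L 2) //.
  rewrite -!PM //.
  by rewrite /D; ring.
rewrite e.
apply: le_trans (ler_wpM2r (powR_ge0 _ _) kb) _.
rewrite PM // /Bnd eL; apply: ler_powR => //.
rewrite e1 e2 Hh.
move: ((h.-1)%:R : R) => H.
rewrite -subr_ge0.
have -> : - (K + 1 + (H + 1) / (K + 2)) - 2 * (H + 1) - 13 -
  (K + 7 + (2 + (- K - 13) * 2 + - (2 + 1 / (K + 1)) * H + D^-1 * H)) = 1 - 1 / (K + 2).
  rewrite /D; field.
  by apply/andP; split; apply/negP => /eqP; rewrite -/K; lra.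
rewrite subr_ge0 div1r invf_le1; lra.
Qed.

Theorem lemma3p2 (R : realType) (d : measure_display) (T : measurableType d)
  (P : probability T R) (rho : R) (xi : int -> T -> nat)
  (hrho : rho < (Lpar%:R : R) `^ (- 16))
  (hmeas : forall (i : int) (A : set nat), measurable (xi i @^-1` A))
  (hindep : forall (s : seq int) (A : int -> set nat), uniq s ->
     P (\bigcap_(i in [set` s]) (xi i @^-1` A i)) =
     (\prod_(i <- s) P (xi i @^-1` A i))%E)
  (hlaw : forall (i : int) (n : nat),
     P [set t | (n <= xi i t)%N] = (rho ^+ n)%:E)
  (k h b : nat) (hh : (1 <= h)%N) :
  (P [set t | Hval Lpar (fun i => xi i t) k 0 = Posz h /\
              Bval Lpar (fun i => xi i t) k 0 = b] <=
   ((Lpar%:R : R) `^ (- (k%:R + h%:R / b.+1%:R) - 2 * h%:R - 13))%:E)%E.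
Proof.
have r0 : 0 <= rho.
  have : (0 <= P [set t | (1 <= xi 0 t)%N])%E by apply: measure_ge0.
  by rewrite hlaw expr1 lee_fin.
have L0 : (0 < Lpar)%N by apply: leq_trans Lpar_ge16.
have mE : measurable [set t | Hval Lpar (fun i => xi i t) k 0 = Posz h /\
              Bval Lpar (fun i => xi i t) k 0 = b].
  apply: (@meas_dep _ _ xi hmeas (map Posz (iota 0 (Lpar ^ k)))
     (fun f => Hval Lpar f k 0 = Posz h /\ Bval Lpar f k 0 = b)).
  move=> f g fg.
  have e : HB Lpar f k (Posz 0) = HB Lpar g k (Posz 0).
    apply: HB_local => // i /andP [_ i2]; apply: fg; apply: map_f.
    by rewrite mem_iota add0n; rewrite mul1n in i2.
  by rewrite /Hval /Bval; change (Posz 0) with (0 : int) in e; rewrite e.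
apply: le_trans (@union_bound _ _ _ P xi hmeas (Wit Lpar k 0 h b) _ mE _) _.
  move=> t [Ht Bt].
  have [W WW gW] := @Wit_complete Lpar (fun i => xi i t) k 0 h Ht hh.
  by rewrite Bt in WW; exists W.
rewrite (eq_big_seq (fun W => (weight rho W)%:E)); last first.
  move=> W WW; apply: (@cyl_prob _ _ _ P rho xi hindep hlaw).
  by have /andP [] := Wit_sites _ _ _ _ _ _ L0 WW.
rewrite sumEFin lee_fin.
exact: (Wit_bound _ _ r0 (ltW hrho)).
Qed.
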